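(* Let $A$ be a skew brace. For a subset $S\subseteq\mathrm{Spec}\,A$ let $K(S)=\bigcap_{I\in S}I$. Then: (i) $K(\emptyset)=A$ and $K\big(\bigcup_{\lambda\in\Lambda}T_\lambda\big)=\bigcap_{\lambda\in\Lambda}K(T_\lambda)$ for every family $\{T_\lambda\}$ of subsets of $\mathrm{Spec}\,A$; (ii) for every ideal $I$ of $A$, $KH(I)=\mathrm{Rad}\,I$, and for every subset $S\subseteq\mathrm{Spec}\,A$, $HK(S)$ is the closure of $S$ in $\mathrm{Spec}\,A$.
   Context: A (left) skew brace is a triple $(A,+,\circ)$ where $(A,+)$ and $(A,\circ)$ are groups such that $a\circ(b+c)=a\circ b-a+a\circ c$ for all $a,b,c$; common identity $e$. Put $\lambda_a(b)=-a+a\circ b$ and $a*b=-a+a\circ b-b$. An ideal is a normal subgroup $I$ of both $(A,+)$ and $(A,\circ)$ with $\lambda_a(I)\subseteq I$ for all $a$. A prime ideal is a proper ideal $P$ such that for any subsets $X,Y$ of $A$, $\{x*y\mid x\in X,y\in Y\}\subseteq P$ implies $X\subseteq P$ or $Y\subseteq P$; $\mathrm{Spec}\,A$ is the set of prime ideals. For an ideal $I$, $H(I)=\{P\in\mathrm{Spec}\,A\mid I\subseteq P\}$ and $\mathrm{Rad}\,I=\bigcap\{P\in\mathrm{Spec}\,A\mid I\subseteq P\}$. The spectral topology on $\mathrm{Spec}\,A$ has as closed sets the sets $H(I)$, $I$ an ideal (and $K(S)$ is an ideal, so $HK(S)$ is defined). *)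

(* Defs.v *)
Record SkewBrace := {
  carrier :> Type;
  add : carrier -> carrier -> carrier;
  opp : carrier -> carrier;
  e : carrier;
  circ : carrier -> carrier -> carrier;
  cinv : carrier -> carrier;
  addA : forall a b c, add a (add b c) = add (add a b) c;
  add0l : forall a, add e a = a;
  add0r : forall a, add a e = a;
  addNl : forall a, add (opp a) a = e;
  addNr : forall a, add a (opp a) = e;
  circA : forall a b c, circ a (circ b c) = circ (circ a b) c;
  circ1l : forall a, circ e a = a;
  circ1r : forall a, circ a e = a;
  circVl : forall a, circ (cinv a) a = e;
  circVr : forall a, circ a (cinv a) = e;
  brace : forall a b c, circ a (add b c) = add (add (circ a b) (opp a)) (circ a c)
}.

Section Defs.
Variable A : SkewBrace.

Definition lam (a b : A) : A := add A (opp A a) (circ A a b).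
Definition star (a b : A) : A := add A (add A (opp A a) (circ A a b)) (opp A b).

Definition is_ideal (I : A -> Prop) : Prop :=
  I (e A) /\
  (forall x y, I x -> I y -> I (add A x y)) /\
  (forall x, I x -> I (opp A x)) /\
  (forall a x, I x -> I (add A (add A a x) (opp A a))) /\
  (forall x y, I x -> I y -> I (circ A x y)) /\
  (forall x, I x -> I (cinv A x)) /\
  (forall a x, I x -> I (circ A (circ A a x) (cinv A a))) /\
  (forall a x, I x -> I (lam a x)).

Definition is_prime (P : A -> Prop) : Prop :=
  is_ideal P /\ (exists a, ~ P a) /\
  (forall X Y : A -> Prop,
      (forall x y, X x -> Y y -> P (star x y)) ->
      (forall x, X x -> P x) \/ (forall y, Y y -> P y)).

Definition Spec (P : A -> Prop) : Prop := is_prime P.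

Definition K (S : (A -> Prop) -> Prop) : A -> Prop :=
  fun a => forall I, S I -> I a.

Definition H (I : A -> Prop) : (A -> Prop) -> Prop :=
  fun P => Spec P /\ (forall a, I a -> P a).

Definition Rad (I : A -> Prop) : A -> Prop :=
  fun a => forall P, Spec P -> (forall x, I x -> P x) -> P a.

Definition closed_spec (C : (A -> Prop) -> Prop) : Prop :=
  exists I, is_ideal I /\ (forall P, C P <-> H I P).

Definition closure (S : (A -> Prop) -> Prop) : (A -> Prop) -> Prop :=
  fun P => Spec P /\
    (forall C, closed_spec C -> (forall Q, S Q -> C Q) -> C P).

End Defs.

Arguments lam {A}. Arguments star {A}. Arguments is_ideal {A}. Arguments is_prime {A}.
Arguments Spec {A}. Arguments K {A}. Arguments H {A}. Arguments Rad {A}.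
Arguments closed_spec {A}. Arguments closure {A}.
Arguments add {s}. Arguments opp {s}. Arguments e {s}. Arguments circ {s}. Arguments cinv {s}.

(* Main.v *)
Require Import Defs.

Lemma K_ideal (A : SkewBrace) (S : (A -> Prop) -> Prop) :
  (forall P, S P -> Spec P) -> is_ideal (K S).
Proof.
  intros HS.
  assert (HI : forall I, S I -> is_ideal I) by (intros I HI; exact (proj1 (HS I HI))).
  unfold is_ideal, K.
  repeat split; intros; destruct (HI I ltac:(assumption)) as (h1&h2&h3&h4&h5&h6&h7&h8).
  - exact h1.
  - apply h2; [apply H|apply H0]; assumption.
  - apply h3; apply H; assumption.
  - apply h4; apply H; assumption.
  - apply h5; [apply H|apply H0]; assumption.
  - apply h6; apply H; assumption.
  - apply h7; apply H; assumption.
  - apply h8; apply H; assumption.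
Qed.

Theorem theorem4p4 (A : SkewBrace) :
  (* (i) *)
  (forall a : A, K (fun _ : A -> Prop => False) a) /\
  (forall (Lambda : Type) (T : Lambda -> (A -> Prop) -> Prop),
      (forall l P, T l P -> Spec P) ->
      forall a : A,
        K (fun P => exists l, T l P) a <-> (forall l, K (T l) a)) /\
  (* (ii) *)
  (forall I : A -> Prop, is_ideal I ->
      forall a : A, K (H I) a <-> Rad I a) /\
  (forall S : (A -> Prop) -> Prop, (forall P, S P -> Spec P) ->
      forall P : A -> Prop, H (K S) P <-> closure S P).
Proof.
  split; [intros a I []|].
  split; [intros L T _ a; unfold K; split; [intros h l I HT; apply h; eauto
         | intros h I [l HT]; eapply h; eauto]|].
  split; [intros I _ a; unfold K, H, Rad; split;
          [intros h P HP HI; apply h; auto | intros h P [HP HI]; apply h; auto]|].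
  intros S HS P; split.
  - intros [HP HKP]; split; [exact HP|].
    intros C [I [HI HC]] HSC.
    apply HC; split; [exact HP|].
    intros a Ia; apply HKP; intros Q SQ.
    destruct (proj1 (HC Q) (HSC Q SQ)) as [_ h]; auto.
  - intros [HP HC].
    apply (HC (H (K S))).
    + exists (K S); split; [apply K_ideal; exact HS| tauto].
    + intros Q SQ; split; [auto|]. intros a h; apply h; exact SQ.
Qed.
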